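(* For every connected graph $H$ with at least two vertices, every connected $H$-graph $G$ satisfies $\mathsf{lpt}(G) \le 4(\mathsf{tw}(H)+1)|E(H)|$.
   Context: All graphs are finite and simple. A subdivision $H'$ of $H$ is obtained by replacing each edge $xy$ of $H$ by a path from $x$ to $y$ of length at least one, with the interiors of these paths pairwise disjoint and anticomplete. A graph $G$ is an $H$-graph if there exist a subdivision $H^{\Phi}$ of $H$ and a map $\Phi: V(G)\to 2^{V(H^{\Phi})}$ such that each $H^{\Phi}[\Phi(v)]$ is connected and, for distinct $u,v\in V(G)$, $uv\in E(G)$ iff $\Phi(u)\cap\Phi(v)\neq\emptyset$. $\mathsf{tw}(H)$ is the treewidth of $H$. A longest path of a connected graph $G$ is a path of maximum length in $G$; a longest path transversal is a set of vertices meeting every longest path; $\mathsf{lpt}(G)$ is the minimum cardinality of a longest path transversal of $G$. *)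

(* Defs.v *)
From HB Require Import structures.
From mathcomp Require Import all_boot.
From mathcomp Require Import boolp.

Set Implicit Arguments.
Unset Strict Implicit.
Unset Printing Implicit Defensive.

Definition simple_graph (T : finType) (e : rel T) : Prop :=
  symmetric e /\ irreflexive e.

Definition connected_graph (T : finType) (e : rel T) : Prop :=
  forall x y : T, connect e x y.

Definition num_edges (T : finType) (e : rel T) : nat :=
  #|[set A : {set T} | [exists x, exists y, e x y && (A == [set x; y])]]|.

Definition induced (T : finType) (e : rel T) (A : {set T}) : rel T :=
  [rel x y | [&& e x y, x \in A & y \in A]].

Definition connected_set (T : finType) (e : rel T) (A : {set T}) : Prop :=
  A != set0 /\ {in A &, forall x y, connect (induced e A) x y}.

Definition acyclic (I : finType) (t : rel I) : Prop :=
  ~ exists s : seq I, [/\ 3 <= size s, uniq s & cycle t s].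

Definition is_tree (I : finType) (t : rel I) : Prop :=
  [/\ 0 < #|I|, simple_graph t, connected_graph t & acyclic t].

Definition tree_decomposition (T : finType) (e : rel T)
    (I : finType) (t : rel I) (B : I -> {set T}) : Prop :=
  [/\ is_tree t,
      forall x : T, exists i, x \in B i,
      forall x y : T, e x y -> exists i, (x \in B i) && (y \in B i)
    & forall x : T, connected_set t [set i | x \in B i]].

Definition td_width (T I : finType) (B : I -> {set T}) : nat :=
  (\max_(i : I) #|B i|).-1.

Definition has_tw_le (T : finType) (e : rel T) (k : nat) : Prop :=
  exists (I : finType) (t : rel I) (B : I -> {set T}),
    tree_decomposition e t B /\ td_width B <= k.

Lemma has_tw_le_ex (T : finType) (e : rel T) :
  exists k, `[< has_tw_le e k >].
Proof.
exists #|T|.-1; apply/asboolP.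
exists unit, (fun _ _ => false), (fun _ => setT); split; last first.
  by rewrite /td_width big_const card_unit /= cardsT.
split.
- split.
  + by rewrite card_unit.
  + by split.
  + by move=> [] []; apply: connect0.
  + move=> [s [s3 us _]].
    have := uniq_leq_size us (fun x _ => mem_enum predT x).
    by rewrite -cardE card_unit => /(leq_trans s3).
- by move=> x; exists tt; rewrite in_setT.
- by move=> x y _; exists tt; rewrite !in_setT.
- move=> x; split.
    by apply/set0Pn; exists tt; rewrite inE in_setT.
  by move=> [] [] _ _; apply: connect0.
Qed.

Definition treewidth (T : finType) (e : rel T) : nat := ex_minn (has_tw_le_ex e).

(** Paths (nonempty sequences of distinct vertices, consecutive ones adjacent);
    the length of path p is size p - 1. *)
Definition gpath (T : finType) (e : rel T) (p : seq T) : bool :=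
  if p is x :: q then path e x q && uniq p else false.

Definition longest_path (T : finType) (e : rel T) (p : seq T) : Prop :=
  gpath e p /\ forall q, gpath e q -> size q <= size p.

Definition lp_transversal (T : finType) (e : rel T) (S : {set T}) : Prop :=
  forall p, longest_path e p -> has (mem S) p.

Lemma lpt_ex (T : finType) (e : rel T) :
  exists k, [exists S : {set T}, (#|S| == k) && `[< lp_transversal e S >]].
Proof.
exists #|T|; apply/existsP; exists setT; rewrite cardsT eqxx /=.
apply/asboolP => -[|x p] [] //= _ _.
by rewrite in_setT.
Qed.

Definition lpt (T : finType) (e : rel T) : nat := ex_minn (lpt_ex e).

(** Subdivisions.  eS is a subdivision of eH if there are an injective
    embedding f of the branch vertices and, for every edge xy of H, a path
    f x :: P x y (of length >= 1) from f x to f y, with P y x the reverse path,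
    such that interiors avoid the branch vertices and are pairwise disjoint,
    every vertex of S lies on one of these paths or is a branch vertex, and the
    edges of S are exactly the consecutive pairs along these paths (so the
    interiors are pairwise anticomplete). *)
Definition adjacent_in (U : eqType) (u v : U) (p : seq U) : Prop :=
  exists p1 p2, p = p1 ++ u :: v :: p2.

Definition subdivision (T U : finType) (eH : rel T) (eS : rel U) : Prop :=
  exists (f : T -> U) (P : T -> T -> seq U),
  [/\ injective f,
      forall x y, eH x y ->
        [/\ P x y != [::], last (f x) (P x y) = f y,
            uniq (f x :: P x y), path eS (f x) (P x y)
          & f y :: P y x = rev (f x :: P x y)],
      forall x y u, eH x y -> u \in P x y -> u != f y ->
        (forall z, u != f z) /\
        (forall x' y', eH x' y' -> u \in f x' :: P x' y' ->
            (x' = x /\ y' = y) \/ (x' = y /\ y' = x)),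
      forall u, (exists z, u = f z) \/ (exists x y, eH x y /\ u \in P x y)
    & forall u v, eS u v <-> exists x y, eH x y /\ adjacent_in u v (f x :: P x y)].

Definition H_graph (T V : finType) (eH : rel T) (eG : rel V) : Prop :=
  exists (U : finType) (eS : rel U) (Phi : V -> {set U}),
  [/\ subdivision eH eS,
      forall v, connected_set eS (Phi v)
    & forall u v, u != v -> (eG u v <-> Phi u :&: Phi v != set0)].

(* Main.v *)
Require Import Defs.
From HB Require Import structures.
From mathcomp Require Import all_boot.
From mathcomp Require Import boolp.
From mathcomp Require Import zify.

Set Implicit Arguments.
Unset Strict Implicit.
Unset Printing Implicit Defensive.



Section GraphLemmas.
Variables (V : finType) (e : rel V).
Hypothesis esym : symmetric e.
Hypothesis eirr : irreflexive e.

Lemma gpath_sorted s : gpath e s = [&& s != [::], sorted e s & uniq s].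
Proof. by case: s. Qed.

Lemma sorted_cat_cons s x t : sorted e (s ++ x :: t) = sorted e (rcons s x) && path e x t.
Proof.
case: s => [|h s] //=.
by rewrite cat_path /= rcons_path andbA.
Qed.

Lemma sorted_rev s : sorted e (rev s) = sorted e s.
Proof.
rewrite rev_sorted; case: s => //= x p; apply: eq_path => y z /=; exact: esym.
Qed.

Lemma insert_gpath p1 a b p2 u :
  gpath e (p1 ++ a :: b :: p2) -> u \notin (p1 ++ a :: b :: p2) ->
  e a u -> e u b -> gpath e (p1 ++ a :: u :: b :: p2).
Proof.
rewrite !gpath_sorted => /and3P [_ hs hu] hnu hau hub.
apply/and3P; split.
- by case: p1 {hs hu hnu}.
- move: hs; rewrite !sorted_cat_cons /= => /andP [-> /andP [_ ->]].
  by rewrite hau hub.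
- move: hu hnu; rewrite !cat_uniq /= !mem_cat !inE.
  case/and3P => -> hh /and3P [ha hb ->].
  rewrite !negb_or => /and3P [hu1 hua /andP [hub' hu2]].
  move: hh; rewrite !negb_or => /and3P [h1 h2 h3].
  move: ha; rewrite negb_or => /andP [ha1 ha2].
  by rewrite h1 h2 h3 hu2 hu1 ha1 ha2 hb hub' eq_sym hua.
Qed.

Lemma consec (s : seq V) v : v \in s -> 1 < size s ->
  exists p1 p2 w, s = p1 ++ v :: w :: p2 \/ s = p1 ++ w :: v :: p2.
Proof.
case/splitPr => p1 p2.
case: p2 => [|w p2] hs.
  case/lastP: p1 hs => [|p1 w] //= _.
  exists p1, [::], w; right; by rewrite cat_rcons.
by exists p1, p2, w; left.
Qed.

Lemma half_end P a : sorted e P -> uniq P -> a \in P ->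
  exists X, [/\ sorted e (rcons X a), uniq (rcons X a), {subset X <= P}
             & size P <= (size X).*2.+1].
Proof.
move=> hs hu ha; case/splitPr: ha hs hu => P1 P2.
rewrite sorted_cat_cons => /andP [hs1 hs2] hu.
case: (leqP (size P2) (size P1)) => hsz.
  exists P1; split => //.
  - by move: hu; rewrite -cat_rcons cat_uniq => /andP [].
  - by move=> z hz; rewrite mem_cat hz.
  - by rewrite size_cat /= -addnn; move: (size P1) (size P2) hsz => n1 n2; lia.
exists (rev P2); split.
- by rewrite -rev_cons sorted_rev.
- by rewrite -rev_cons rev_uniq; move: hu; rewrite cat_uniq => /and3P [].
- by move=> z; rewrite mem_rev => hz; rewrite mem_cat inE hz !orbT.
- by rewrite size_cat size_rev /= -addnn; move: (size P1) (size P2) hsz => n1 n2; lia.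
Qed.

Lemma half_start P a : sorted e P -> uniq P -> a \in P ->
  exists Y, [/\ sorted e (a :: Y), uniq (a :: Y), {subset Y <= P}
             & size P <= (size Y).*2.+1].
Proof.
move=> hs hu ha; case: (half_end hs hu ha) => X [h1 h2 h3 h4].
exists (rev X); split.
- by rewrite -rev_rcons sorted_rev.
- by rewrite -rev_rcons rev_uniq.
- by move=> z; rewrite mem_rev; exact: h3.
- by rewrite size_rev.
Qed.

Lemma bridge (A B : pred V) x w : x \in A -> (forall z, z \in A -> z \notin B) ->
  path e x w -> last x w \in B ->
  exists a M b, [/\ a \in A, b \in B, path e a (rcons M b)
                 & all (fun z => (z \notin A) && (z \notin B)) M].
Proof.
move=> hx hAB.
have inv : x \in A \/ ((x \notin A) && (x \notin B) /\ exists a M, [/\ a \in A,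
   path e a (rcons M x) & all (fun z => (z \notin A) && (z \notin B)) M]) by left.
elim: w x inv {hx} => [|y w IH] x inv /=.
  move=> _ hxB; case: inv => [hxA|[/andP [_ hB] _]]; last by rewrite hxB in hB.
  by move: (hAB _ hxA); rewrite hxB.
move=> /andP [hxy hp] hl.
case hyB: (y \in B).
  case: inv => [hxA|[hxAB [a [M [ha hM hall]]]]].
    by exists x, [::], y; split => //=; rewrite hxy.
  exists a, (rcons M x), y; split => //.
    by rewrite rcons_path hM last_rcons.
  by rewrite all_rcons hxAB.
apply: IH hp hl.
case hyA: (y \in A); first by left.
right; split; first by rewrite hyB.
case: inv => [hxA|[hxAB [a [M [ha hM hall]]]]].
  by exists x, [::]; split => //=; rewrite hxy.
exists a, (rcons M x); split => //.
  by rewrite rcons_path hM last_rcons.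
by rewrite all_rcons hxAB.
Qed.

Lemma lp_meet P Q : connected_graph e -> longest_path e P -> longest_path e Q ->
  has (mem P) Q.
Proof.
move=> hc [hP lP] [hQ lQ].
have sPQ : size P = size Q by apply/eqP; rewrite eqn_leq lP // lQ.
apply/negPn/negP => hn.
case: P hP lP hn sPQ => [|p0 P'] // hP lP hn sPQ.
case: Q hQ lQ hn sPQ => [|q0 Q'] // hQ lQ hn sPQ.
set A := [pred z | z \in p0 :: P'].
set B := [pred z | z \in q0 :: Q'].
have hdis : forall z, z \in A -> z \notin B.
  by move=> z hz; apply: contra hn => hzQ; apply/hasP; exists z.
case/connectP: (hc p0 q0) => w hw hl.
have hp0 : p0 \in A by rewrite /A unfold_in /= mem_head.
have hlq : last p0 w \in B by rewrite -hl /B unfold_in /= mem_head.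
case: (bridge hp0 hdis hw hlq) => a [M [b [ha hb hM hall]]].
have hl2 : last a (rcons M b) = b by rewrite last_rcons.
case: (shortenP hM) hl2 => p' hp' hu' hsub hlast.
have hab : a != b by apply/negP => /eqP hab; move: (hdis _ ha); rewrite hab hb.
case/lastP: p' hp' hu' hsub hlast => [|M' b'] hp' hu' hsub hlast.
  by move: hab; rewrite -hlast /= eqxx.
rewrite last_rcons in hlast; subst b'.
have hM' : all (fun z => (z \notin A) && (z \notin B)) M'.
  apply/allP => z hz.
  have : z \in rcons M b by apply: hsub; rewrite mem_rcons inE hz orbT.
  rewrite mem_rcons inE => /orP [/eqP hzb|hzM].
    by move: hu'; rewrite /= rcons_uniq -hzb hz andbF.
  by move/allP: hall => /(_ _ hzM).
move: (hP) (hQ); rewrite !gpath_sorted => /and3P [_ sP uP] /and3P [_ sQ uQ].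
case: (half_end sP uP ha) => X [sX uX subX szX].
case: (half_start sQ uQ hb) => Y [sY uY subY szY].
have hN : gpath e (X ++ a :: M' ++ b :: Y).
  rewrite gpath_sorted; apply/and3P; split; first by case: X {sX uX subX szX}.
    rewrite sorted_cat_cons sX /= cat_path.
    move: hp'; rewrite rcons_path /= => /andP [-> ->] /=.
    exact: sY.
  rewrite -cat_rcons cat_uniq uX /=.
  apply/andP; split.
    apply/hasPn => z; rewrite mem_cat inE => hz.
    have hzP : z \notin A.
      case/or3P: hz => [hz|/eqP ->|hz].
      - by move/allP: hM' => /(_ _ hz) /andP [].
      - by apply/negP => hbA; move: (hdis _ hbA); rewrite hb.
      - by apply/negP => hzP; move: (hdis _ hzP); rewrite /B unfold_in /= subY.
    apply/negP => hz2; move: hzP; rewrite mem_rcons inE in hz2.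
    case/orP: hz2 => [/eqP ->|hz2]; first by rewrite ha.
    by rewrite /A unfold_in /= subX.
  rewrite cat_uniq uY andbT.
  move: (hu'); rewrite /= rcons_uniq => /andP [_ /andP [_ ->]] /=.
  rewrite negb_or; apply/andP; split.
    by move: hu'; rewrite /= rcons_uniq => /andP [_ /andP [->]].
  apply/hasPn => z hz; apply/negP => hzM; move/allP: hM' => /(_ _ hzM) /andP [_].
  by rewrite /B unfold_in /= subY.
move: (lP _ hN) szX szY; rewrite sPQ !size_cat /= !size_cat /= -!addnn.
move: (size X) (size Y) (size M') (size Q') => n1 n2 n3 n4 h1 h2 h3.
clear -h1 h2 h3; lia.
Qed.

End GraphLemmas.


Lemma idx_pair (U : eqType) (p1 p2 : seq U) a b :
  uniq (p1 ++ a :: b :: p2) ->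
  index b (p1 ++ a :: b :: p2) = (index a (p1 ++ a :: b :: p2)).+1.
Proof.
rewrite cat_uniq /= => /and3P [_ hh /and3P [hab _ _]].
move: hh; rewrite !negb_or => /andP [ha /andP [hb _]].
rewrite !index_cat (negbTE ha) (negbTE hb) /= eqxx.
rewrite inE negb_or in hab; case/andP: hab => hab _.
by rewrite (negbTE hab) eqxx addn1 addn0.
Qed.

Lemma rev_pair (U : eqType) (p1 p2 : seq U) a b :
  rev (p1 ++ a :: b :: p2) = rev p2 ++ b :: a :: rev p1.
Proof. by rewrite rev_cat !rev_cons -!cats1 -!catA. Qed.

Section Subdiv.
Variables (T U : finType) (eH : rel T) (eS : rel U) (f : T -> U) (P : T -> T -> seq U).
Hypothesis eHsym : symmetric eH.
Hypothesis HP : forall x y, eH x y ->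
        [/\ P x y != [::], last (f x) (P x y) = f y,
            uniq (f x :: P x y), path eS (f x) (P x y)
          & f y :: P y x = rev (f x :: P x y)].
Hypothesis Hdisj : forall x y u, eH x y -> u \in P x y -> u != f y ->
        (forall z, u != f z) /\
        (forall x' y', eH x' y' -> u \in f x' :: P x' y' ->
            (x' = x /\ y' = y) \/ (x' = y /\ y' = x)).
Hypothesis HeS : forall u v, eS u v <-> exists x y, eH x y /\ adjacent_in u v (f x :: P x y).

Definition Sq x y := f x :: P x y.
Definition mm x y := size (P x y).
Definition Int x y u := (u \in P x y) && (u != f y).
Definition pos x y u := index u (Sq x y).
Definition Sn x y i := nth (f x) (Sq x y) i.

Section Edge.
Variables x y : T.
Hypothesis hxy : eH x y.

Lemma Sq_uniq : uniq (Sq x y).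
Proof. by case: (HP hxy). Qed.

Lemma size_Sq : size (Sq x y) = (mm x y).+1.
Proof. by []. Qed.

Lemma Sn0 : Sn x y 0 = f x.
Proof. by []. Qed.

Lemma Sn_last : Sn x y (mm x y) = f y.
Proof.
case: (HP hxy) => _ hl _ _ _.
by rewrite /Sn /mm -hl -[size (P x y)]/((size (Sq x y)).-1) nth_last.
Qed.

Lemma Sq_rev : Sq x y = rev (Sq y x).
Proof. by case: (HP hxy) => _ _ _ _ h; rewrite /Sq h revK. Qed.

Lemma Int_notbranch u z : Int x y u -> u != f z.
Proof. by case/andP => h1 h2; case: (Hdisj hxy h1 h2) => h _. Qed.

Lemma Int_Sq u : Int x y u -> u \in Sq x y.
Proof. by case/andP => h _; rewrite /Sq inE h orbT. Qed.

Lemma Sn_pos u : u \in Sq x y -> Sn x y (pos x y u) = u.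
Proof. by move=> h; rewrite /Sn /pos nth_index. Qed.

Lemma pos_Sn i : i <= mm x y -> pos x y (Sn x y i) = i.
Proof. by move=> h; rewrite /pos /Sn index_uniq // Sq_uniq. Qed.

Lemma pos_lt u : u \in Sq x y -> pos x y u <= mm x y.
Proof. by move=> h; rewrite /pos -ltnS -size_Sq index_mem. Qed.

Lemma Sn_in i : i <= mm x y -> Sn x y i \in Sq x y.
Proof. by move=> h; rewrite /Sn mem_nth // size_Sq. Qed.

Lemma Int_pos u : Int x y u -> 0 < pos x y u < mm x y.
Proof.
move=> hu; have hS := Int_Sq hu.
have hle := pos_lt hS.
apply/andP; split.
  rewrite lt0n; apply/negP => /eqP h0.
  by move: (Int_notbranch x hu); rewrite -(Sn_pos hS) h0 Sn0 eqxx.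
rewrite ltn_neqAle hle andbT; apply/negP => /eqP hm.
by move: (Int_notbranch y hu); rewrite -(Sn_pos hS) hm Sn_last eqxx.
Qed.

Lemma Sn_Int i : 0 < i < mm x y -> Int x y (Sn x y i).
Proof.
case/andP => h0 hm; apply/andP; split.
  case: i h0 hm => [|i] // _ hm.
  by rewrite /Sn /Sq /= mem_nth //; exact: (ltn_trans (ltnSn i) hm).
apply/negP => /eqP h.
have : pos x y (Sn x y i) = pos x y (Sn x y (mm x y)) by rewrite h Sn_last.
by rewrite !pos_Sn // ?(ltnW hm) // => hi; move: hm; rewrite hi ltnn.
Qed.

Lemma not_Int_end u : u \in Sq x y -> ~~ Int x y u ->
  pos x y u = 0 \/ pos x y u = mm x y.
Proof.
move=> hS hI; have hle := pos_lt hS.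
case: (posnP (pos x y u)) => [->|hp]; first by left.
case: (ltngtP (pos x y u) (mm x y)) => [hl|hl|->]; last by right.
- by move: hI; rewrite -(Sn_pos hS) Sn_Int // hp hl.
- by move: hle; rewrite leqNgt hl.
Qed.

Lemma adj u u' : Int x y u -> eS u u' ->
  u' \in Sq x y /\ (pos x y u' = (pos x y u).+1 \/ (pos x y u').+1 = pos x y u).
Proof.
move=> hu /HeS [x' [y' [hxy' [p1 [p2 hs]]]]].
have hu' : u \in f x' :: P x' y' by rewrite hs mem_cat inE eqxx orbT.
case/andP: (hu) => h1 h2.
case: (Hdisj hxy h1 h2) => _ /(_ _ _ hxy' hu') [[e1 e2]|[e1 e2]]; subst x' y'.
  have hU := Sq_uniq; rewrite /Sq hs in hU.
  split; first by rewrite /Sq hs mem_cat !inE eqxx !orbT.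
  by left; rewrite /pos /Sq hs idx_pair.
have hs' : Sq x y = rev p2 ++ u' :: u :: rev p1.
  by rewrite Sq_rev /Sq hs rev_pair.
have hU := Sq_uniq; rewrite hs' in hU.
split; first by rewrite hs' mem_cat !inE eqxx !orbT.
by right; rewrite /pos hs' idx_pair.
Qed.

End Edge.

Lemma eS_sym : symmetric eS.
Proof.
have H : forall u v, eS u v -> eS v u.
  move=> u v /HeS [x [y [hxy [p1 [p2 hs]]]]].
  have hyx : eH y x by rewrite eHsym.
  apply/HeS; exists y, x; split => //.
  exists (rev p2), (rev p1).
  have -> : f y :: P y x = rev (f x :: P x y) by case: (HP hxy).
  by rewrite hs rev_pair.
by move=> u v; apply/idP/idP => /H.
Qed.

Lemma ivt_walk x y (A : {set U}) a p : eH x y -> a \in A ->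
  (forall u, u \in A -> Int x y u) -> path (induced eS A) a p ->
  forall i, minn (pos x y a) (pos x y (last a p)) <= i <= maxn (pos x y a) (pos x y (last a p)) ->
  Sn x y i \in A.
Proof.
move=> hxy; elim: p a => [|b p IH] a ha hA /=.
  move=> _ i; rewrite minnn maxnn => hi.
  have -> : i = pos x y a by move: hi; move: (pos x y a) => n; clear; lia.
  by rewrite Sn_pos // Int_Sq // hA.
move=> /andP [/and3P [hab _ hb] hp] i hi.
case: (adj hxy (hA _ ha) hab) => _ hpos.
case: (eqVneq i (pos x y a)) => [->|hne]; first by rewrite Sn_pos ?Int_Sq ?hA.
apply: (IH b hb hA hp).
move: hi hpos hne; move: (pos x y (last b p)) (pos x y a) (pos x y b) => n1 n2 n3.
clear; lia.
Qed.

Lemma exit_walk x y (A : {set U}) a p : eH x y -> a \in A ->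
  path (induced eS A) a p -> Int x y a -> ~~ Int x y (last a p) ->
  (forall i, i <= pos x y a -> Sn x y i \in A) \/
  (forall i, pos x y a <= i <= mm x y -> Sn x y i \in A).
Proof.
move=> hxy; elim: p a => [|b p IH] a ha /=; first by move=> _ ->.
move=> /andP [/and3P [hab _ hb] hp] hIa hl.
case: (adj hxy hIa hab) => hbS hpos.
have hpa := Int_pos hxy hIa.
have Sa : Sn x y (pos x y a) = a := Sn_pos (Int_Sq hIa).
have Sb : Sn x y (pos x y b) = b := Sn_pos hbS.
case hIb: (Int x y b).
  have hIH := IH b hb hp hIb hl.
  move: Sa Sb hIH; move: (pos x y a) (pos x y b) hpa hpos => na nb hpa hpos Sa Sb [hL|hR].
  - case: hpos => hpos.
    + by left => i hi; apply: hL; move: hi hpos; clear; lia.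
    + left => i hi; case: (eqVneq i na) => [->|hne]; first by rewrite Sa.
      by apply: hL; move: hi hpos hne; clear; lia.
  - case: hpos => hpos.
    + right => i hi; case: (eqVneq i na) => [->|hne]; first by rewrite Sa.
      by apply: hR; move: hi hpos hne; clear; lia.
    + by right => i hi; apply: hR; move: hi hpos; clear; lia.
have hbE := not_Int_end hxy hbS (negbT hIb).
move: Sa Sb hbE; move: (pos x y a) (pos x y b) hpa hpos => na nb hpa hpos Sa Sb hbE.
case: hbE => hb0.
- left => i hi.
  have : i = nb \/ i = na by move: hi hb0 hpos hpa; clear; lia.
  by case=> ->; [rewrite Sb | rewrite Sa].
- right => i hi.
  have : i = nb \/ i = na by move: hi hb0 hpos hpa; move: (mm x y) => n; clear; lia.
  by case=> ->; [rewrite Sb | rewrite Sa].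
Qed.

Definition conn (A : {set U}) :=
  forall a b, a \in A -> b \in A -> connect (induced eS A) a b.

Lemma conn_Int x y A a : eH x y -> conn A -> (forall z, f z \notin A) ->
  a \in A -> Int x y a -> forall b, b \in A -> Int x y b.
Proof.
move=> hxy hc hnb ha hIa b hb; apply/negPn/negP => hIb.
case/connectP: (hc a b ha hb) => p hp hl.
have hIl : ~~ Int x y (last a p) by rewrite -hl.
case: (exit_walk hxy ha hp hIa hIl) => H.
  by move: (H 0 (leq0n _)); rewrite Sn0 (negbTE (hnb x)).
have := Int_pos hxy hIa => /andP [_ hlt].
by move: (H (mm x y)); rewrite leqnn (ltnW hlt) Sn_last // (negbTE (hnb y)) => /(_ isT).
Qed.

Lemma conn_ivt x y A a b : eH x y -> conn A -> (forall u, u \in A -> Int x y u) ->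
  a \in A -> b \in A -> forall i, pos x y a <= i <= pos x y b -> Sn x y i \in A.
Proof.
move=> hxy hc hA ha hb i hi.
case/connectP: (hc a b ha hb) => p hp hl.
apply: (ivt_walk hxy ha hA hp); rewrite -hl.
by move: hi; move: (pos x y a) (pos x y b) => n1 n2; clear; lia.
Qed.

Lemma conn_branch x y A r z : eH x y -> conn A -> r \in A -> Int x y r -> f z \in A ->
  (forall i, i <= pos x y r -> Sn x y i \in A) \/
  (forall i, pos x y r <= i <= mm x y -> Sn x y i \in A).
Proof.
move=> hxy hc hr hIr hz.
case/connectP: (hc r (f z) hr hz) => p hp hl.
apply: (exit_walk hxy hr hp hIr).
rewrite -hl; apply/negP => hI.
by move: (Int_notbranch hxy z hI); rewrite eqxx.
Qed.

Variables (V : finType) (eG : rel V) (Phi : V -> {set U}) (v0 : V).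
Hypothesis HPhi : forall v, connected_set eS (Phi v).
Hypothesis HG : forall u v, u != v -> (eG u v <-> Phi u :&: Phi v != set0).
Hypothesis eGsym : symmetric eG.
Hypothesis eGirr : irreflexive eG.
Hypothesis eGconn : connected_graph eG.

Let eSsym := eS_sym.

Lemma Phi_conn v : conn (Phi v).
Proof. by case: (HPhi v) => _ h a b ha hb; apply: h. Qed.

Lemma Phi_nonempty v : exists t, t \in Phi v.
Proof. by case: (HPhi v) => /set0Pn [t ht] _; exists t. Qed.

Lemma eG_meet u v : eG u v -> exists t, t \in Phi u /\ t \in Phi v.
Proof.
move=> huv; have hne : u != v by apply/negP => /eqP e; move: huv; rewrite e eGirr.
case/(HG hne)/set0Pn: huv => t; rewrite inE => /andP [h1 h2]; by exists t.
Qed.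

Lemma meet_eG u v t : u != v -> t \in Phi u -> t \in Phi v -> eG u v.
Proof.
move=> hne h1 h2; apply/(HG hne)/set0Pn; exists t; by rewrite inE h1 h2.
Qed.

Lemma induced_sym (A : {set U}) : symmetric (induced eS A).
Proof. by move=> a b; rewrite /induced /= eSsym; case: (a \in A); case: (b \in A); rewrite ?andbF. Qed.

Lemma conn_mono (A B : {set U}) a b : A \subset B ->
  connect (induced eS A) a b -> connect (induced eS B) a b.
Proof.
move=> hAB; apply: connect_sub => u w /= /and3P [h1 h2 h3].
by apply: connect1; rewrite /induced /= h1 (subsetP hAB _ h2) (subsetP hAB _ h3).
Qed.

Lemma conn_hub (A : {set U}) t : (forall a, a \in A -> connect (induced eS A) a t) -> conn A.
Proof.
move=> h a b ha hb; apply: connect_trans (h a ha) _.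
by rewrite (sym_connect_sym (@induced_sym A)); apply: h.
Qed.

Definition X (Q : seq V) : {set U} := [set u | has (fun v => u \in Phi v) Q].

Lemma X_conn q Q : path eG q Q -> conn (X (q :: Q)).
Proof.
elim: Q q => [|w Q IH] q /=.
  move=> _; case: (Phi_nonempty q) => t ht.
  apply: (@conn_hub _ t) => a; rewrite inE /= orbF => ha.
  apply: (conn_mono (A := Phi q)).
    by apply/subsetP => u hu; rewrite inE /= hu.
  exact: (@Phi_conn q a t ha ht).
move=> /andP [hqw hp].
case: (eG_meet hqw) => t [htq htw].
have sub1 : Phi q \subset X [:: q, w & Q] by apply/subsetP => u hu; rewrite inE /= hu.
have sub2 : X (w :: Q) \subset X [:: q, w & Q].
  by apply/subsetP => u; rewrite !inE /= => ->; rewrite orbT.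
apply: (conn_hub (t := t)) => a; rewrite inE /= => /orP [ha|ha].
  by apply: (conn_mono sub1); apply: (@Phi_conn q a t ha htq).
apply: (conn_mono sub2); apply: (IH w hp); first by rewrite inE.
by rewrite inE /= htw.
Qed.

Lemma X_gpath Q : gpath eG Q -> conn (X Q).
Proof. by case: Q => [|q Q] //= /andP [hp _]; apply: X_conn. Qed.

Lemma X_nonempty Q : gpath eG Q -> exists t, t \in X Q.
Proof.
case: Q => [|q Q] // _; case: (Phi_nonempty q) => t ht; exists t.
by rewrite inE /= ht.
Qed.

Lemma X_mem Q v t : v \in Q -> t \in Phi v -> t \in X Q.
Proof. by move=> hv ht; rewrite inE; apply/hasP; exists v. Qed.

Lemma X_memP Q t : t \in X Q -> exists v, v \in Q /\ t \in Phi v.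
Proof. by rewrite inE => /hasP [v hv ht]; exists v. Qed.

Definition caseA x y Q := longest_path eG Q /\ (forall u, u \in X Q -> Int x y u).

Lemma X_min x y Q : caseA x y Q ->
  exists t, t \in X Q /\ forall t', t' \in X Q -> pos x y t <= pos x y t'.
Proof.
move=> [[hg _] hI].
have ex : exists i, [exists t in X Q, pos x y t == i].
  case: (X_nonempty hg) => t ht; exists (pos x y t); apply/existsP; exists t.
  by rewrite ht eqxx.
case: (ex_minnP ex) => i /existsP [t /andP [ht /eqP hti]] hmin.
exists t; split => // t' ht'; rewrite hti; apply: hmin.
by apply/existsP; exists t'; rewrite ht' eqxx.
Qed.

Lemma helly x y : eH x y -> exists s, s <= mm x y /\
  forall Q, caseA x y Q -> Sn x y s \in X Q.
Proof.
move=> hxy.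
case: (pselect (exists Q, caseA x y Q)) => [[Q0 hQ0]|hno]; last first.
  by exists 0; split => // Q hQ; exfalso; apply: hno; exists Q.
pose Mp i := `[< exists Q, caseA x y Q /\ exists t, [/\ t \in X Q, pos x y t = i &
              forall t', t' \in X Q -> i <= pos x y t'] >].
have MpI : forall Q, caseA x y Q -> exists t, t \in X Q /\ Mp (pos x y t).
  move=> Q hQ; case: (X_min hQ) => t [ht hmin]; exists t; split => //.
  by apply/asboolP; exists Q; split => //; exists t; split.
have exM : exists i, Mp i by case: (MpI _ hQ0) => t [_ h]; exists (pos x y t).
have ubM : forall i, Mp i -> i <= mm x y.
  move=> i /asboolP [Q [[_ hI] [t [ht <- _]]]].
  exact: (pos_lt (Int_Sq (hI _ ht))).
case: (ex_maxnP exM ubM) => s hs hmax.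
exists s; split; first exact: ubM.
move=> Q hQ.
case: (MpI _ hQ) => t1 [ht1 hM1]; have hle1 := hmax _ hM1.
case/asboolP: hs => Q' [hQ' [t' [ht' _ hQmin]]].
case/hasP: (lp_meet eGsym eGconn hQ.1 hQ'.1) => v hvQ' hvQ.
case: (Phi_nonempty v) => t2 ht2.
have ht2Q : t2 \in X Q by apply: (X_mem hvQ ht2).
have hle2 : s <= pos x y t2 by apply: hQmin; apply: (X_mem hvQ' ht2).
apply: (conn_ivt hxy (X_gpath hQ.1.1) hQ.2 ht1 ht2Q).
by rewrite hle1 hle2.
Qed.


Definition Rext (x y : T) (v : V) (s : nat) := find (fun u => u \notin Phi v) (drop s (Sq x y)).
Definition Lext (x y : T) (v : V) (s : nat) := find (fun u => u \notin Phi v) (rev (take s.+1 (Sq x y))).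

Lemma Rext_mem x y v s k : k < Rext x y v s -> Sn x y (s + k) \in Phi v.
Proof. by move=> hk; have := before_find (f x) hk; rewrite nth_drop => /negbFE. Qed.

Lemma Rext_ge x y v s d : (forall k, k <= d -> Sn x y (s + k) \in Phi v) ->
  s + d <= mm x y -> d < Rext x y v s.
Proof.
move=> h hsd; rewrite ltnNge; apply/negP => hle.
have hsz : Rext x y v s < size (drop s (Sq x y)).
  rewrite size_drop size_Sq; move: hle hsd; move: (Rext x y v s) (mm x y) => n1 n2.
  clear; lia.
have := nth_find (f x) (a := fun u => u \notin Phi v) (s := drop s (Sq x y)).
rewrite has_find => /(_ hsz); rewrite nth_drop => /negP; apply; apply: h.
exact: hle.
Qed.

Lemma Lext_nth x y s k : s <= mm x y -> k <= s ->
  nth (f x) (rev (take s.+1 (Sq x y))) k = Sn x y (s - k).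
Proof.
move=> hs hk.
have hsz : size (take s.+1 (Sq x y)) = s.+1 by rewrite size_takel // size_Sq.
rewrite nth_rev hsz ?ltnS // subSS nth_take //.
by move: hk; clear; lia.
Qed.

Lemma Lext_mem x y v s k : s <= mm x y -> k < Lext x y v s -> k <= s ->
  Sn x y (s - k) \in Phi v.
Proof.
by move=> hs hk hks; have := before_find (f x) hk; rewrite (Lext_nth hs hks) => /negbFE.
Qed.

Lemma Lext_ge x y v s d : s <= mm x y -> d <= s ->
  (forall k, k <= d -> Sn x y (s - k) \in Phi v) -> d < Lext x y v s.
Proof.
move=> hs hds h; rewrite ltnNge; apply/negP => hle.
have hsz : Lext x y v s < size (rev (take s.+1 (Sq x y))).
  rewrite size_rev size_takel ?size_Sq //; move: hle hds; move: (Lext x y v s) => n1.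
  clear; lia.
have := nth_find (f x) (a := fun u => u \notin Phi v) (s := rev (take s.+1 (Sq x y))).
rewrite has_find => /(_ hsz); rewrite Lext_nth //; last by apply: leq_trans hle hds.
by move/negP; apply; apply: h.
Qed.

Lemma ex_max (K : pred V) (g : V -> nat) : exists c, forall v, K v -> K c /\ g v <= g c.
Proof.
case: (pselect (exists v, K v)) => [[w hw]|hno].
  case: (arg_maxnP g hw) => c hc hmax; exists c => v hv; split => //; exact: hmax.
by exists v0 => v hv; exfalso; apply: hno; exists v.
Qed.

Definition Good (x y : T) (c1 c2 a b : V) :=
  [/\ forall v, f x \in Phi v -> f x \in Phi c1 /\ Rext x y v 0 <= Rext x y c1 0,
      forall v, f y \in Phi v -> f y \in Phi c2 /\ Lext x y v (mm x y) <= Lext x y c2 (mm x y)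
    & exists s, [/\ s <= mm x y, forall Q, caseA x y Q -> Sn x y s \in X Q &
        forall v, Sn x y s \in Phi v -> [/\ Sn x y s \in Phi a, Sn x y s \in Phi b,
              Lext x y v s <= Lext x y a s & Rext x y v s <= Rext x y b s]]].

Lemma good_ex x y : exists q : V * V * V * V,
  eH x y -> Good x y q.1.1.1 q.1.1.2 q.1.2 q.2.
Proof.
case: (pselect (eH x y)) => hxy; last by exists (v0, v0, v0, v0).
case: (ex_max [pred v | f x \in Phi v] (fun v => Rext x y v 0)) => c1 h1.
case: (ex_max [pred v | f y \in Phi v] (fun v => Lext x y v (mm x y))) => c2 h2.
case: (helly hxy) => s [hs hH].
case: (ex_max [pred v | Sn x y s \in Phi v] (fun v => Lext x y v s)) => a ha.
case: (ex_max [pred v | Sn x y s \in Phi v] (fun v => Rext x y v s)) => b hb.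
exists (c1, c2, a, b) => _ /=; split.
- by move=> v hv; apply: (h1 v hv).
- by move=> v hv; apply: (h2 v hv).
- exists s; split => // v hv.
  case: (ha v hv) => ha1 ha2; case: (hb v hv) => hb1 hb2; by split.
Qed.

Hypothesis Hcov : forall u, (exists z, u = f z) \/ (exists x y, eH x y /\ u \in P x y).
Hypothesis Hdeg : forall x, exists y, eH x y.
Hypothesis HV2 : exists a b : V, a != b.
Variable g : T * T -> V * V * V * V.
Hypothesis Hg : forall xy : T * T, eH xy.1 xy.2 ->
  Good xy.1 xy.2 (g xy).1.1.1 (g xy).1.1.2 (g xy).1.2 (g xy).2.

Definition D := [set xy : T * T | eH xy.1 xy.2].
Definition W : {set V} :=
  [set (g xy).1.1.1 | xy in D] :|: [set (g xy).1.1.2 | xy in D] :|: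
  [set (g xy).1.2 | xy in D] :|: [set (g xy).2 | xy in D].

Lemma inW x y : eH x y ->
  [/\ (g (x, y)).1.1.1 \in W, (g (x, y)).1.1.2 \in W, (g (x, y)).1.2 \in W
    & (g (x, y)).2 \in W].
Proof.
move=> hxy; have hD : (x, y) \in D by rewrite inE.
by rewrite !inE !(imset_f _ hD) !orbT.
Qed.

Lemma gpath_edge p1 a b p2 : gpath eG (p1 ++ a :: b :: p2) -> eG a b.
Proof.
by rewrite gpath_sorted => /and3P [_ hs _]; move: hs; rewrite sorted_cat_cons /= => /and3P [_ ->].
Qed.

Lemma lp_size2 p : longest_path eG p -> 1 < size p.
Proof.
case=> _ hl; case: HV2 => a [b hab].
case/connectP: (eGconn a b) => [[|z w]] /=; first by move=> _ hb; rewrite hb eqxx in hab.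
case/andP => haz _ _.
have hza : z != a by apply/negP => /eqP e; move: haz; rewrite e eGirr.
apply: (leq_trans _ (hl [:: a; z] _)) => //=.
by rewrite haz inE eq_sym hza.
Qed.

Lemma caseB_u v t z : f z \in Phi v -> t \in Phi v ->
  exists u, [/\ u \in W, t \in Phi u & exists t', t' \in Phi v /\ t' \in Phi u].
Proof.
move=> hz ht.
have branch : forall z', f z' \in Phi v -> exists u, [/\ u \in W, f z' \in Phi u &
     exists t', t' \in Phi v /\ t' \in Phi u].
  move=> z' hz'; case: (Hdeg z') => y hy.
  case: (Hg (xy := (z', y)) hy) => /= /(_ v hz') [hc _] _ _.
  exists (g (z', y)).1.1.1; split => //; first by case: (inW hy).
  by exists (f z').
case: (Hcov t) => [[z' e]|[x [y [hxy htP]]]]; first by rewrite e in ht *; exact: (branch z' ht).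
case: (eqVneq t (f y)) => [e|hty]; first by rewrite e in ht *; exact: (branch y ht).
have hI : Int x y t by rewrite /Int htP hty.
case: (Hg (xy := (x, y)) hxy) => /= hc1 hc2 _.
have hpos := Int_pos hxy hI.
have hSt : Sn x y (pos x y t) = t := Sn_pos (Int_Sq hI).
case: (conn_branch hxy (@Phi_conn v) ht hI hz) => H.
- have hfx : f x \in Phi v by rewrite -(Sn0 x y); apply: H.
  case: (hc1 v hfx) => hc hle.
  exists (g (x, y)).1.1.1; split; first by case: (inW hxy).
    rewrite -hSt -(add0n (pos x y t)); apply: Rext_mem.
    apply: leq_trans hle; apply: Rext_ge.
      by move=> k hk; rewrite add0n; apply: H.
    by rewrite add0n ltnW // (andP hpos).2.
  by exists (f x).
- have hfy : f y \in Phi v by rewrite -(Sn_last hxy); apply: H; rewrite leqnn (ltnW (andP hpos).2).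
  case: (hc2 v hfy) => hc hle.
  exists (g (x, y)).1.1.2; split; first by case: (inW hxy).
    have -> : t = Sn x y (mm x y - (mm x y - pos x y t)).
      by rewrite subKn ?hSt // ltnW // (andP hpos).2.
    apply: Lext_mem => //; last exact: leq_subr.
    apply: leq_trans hle; apply: Lext_ge => //; first exact: leq_subr.
    move=> k hk; apply: H; apply/andP; split; last exact: leq_subr.
    move: hk (andP hpos).2; move: (mm x y) (pos x y t) => n1 n2; clear; lia.
  by exists (f y).
Qed.

Lemma key_claim p : longest_path eG p ->
  exists v w u t t', [/\ exists p1 p2, p = p1 ++ v :: w :: p2 \/ p = p1 ++ w :: v :: p2,
     u \in W, t \in Phi w /\ t \in Phi u & t' \in Phi v /\ t' \in Phi u].
Proof.
move=> hp; have hsz := lp_size2 hp.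
have edge : forall p1 p2 v w, p = p1 ++ v :: w :: p2 \/ p = p1 ++ w :: v :: p2 -> eG v w.
  move=> p1 p2 v w [e|e]; have := hp.1; rewrite e => /gpath_edge //.
  by rewrite eGsym.
case: (pselect (exists v, v \in p /\ exists z, f z \in Phi v)) => [[v [hv [z hz]]]|hA].
  case: (consec hv hsz) => p1 [p2 [w hcons]].
  case: (eG_meet (edge _ _ _ _ hcons)) => t [htv htw].
  case: (caseB_u hz htv) => u [huW htu [t' [h1 h2]]].
  exists v, w, u, t, t'; split => //; by exists p1, p2.
have hnb : forall z, f z \notin X p.
  move=> z; apply/negP => /X_memP [v [hv hz]]; apply: hA; exists v; split => //; by exists z.
case: p hp hsz edge hA hnb => [|a0 [|b0 p']] // hp hsz edge hA hnb.
have e0 : a0 :: b0 :: p' = [::] ++ a0 :: b0 :: p' \/ a0 :: b0 :: p' = [::] ++ b0 :: a0 :: p' by left.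
case: (eG_meet (edge _ _ _ _ e0)) => t0 [ht0a ht0b].
have ha0 : a0 \in a0 :: b0 :: p' by rewrite mem_head.
have nbr : forall z, t0 != f z.
  by move=> z; apply/negP => /eqP e; apply: hA; exists a0; split => //; exists z; rewrite -e.
case: (Hcov t0) => [[z e]|[x [y [hxy htP]]]]; first by move: (nbr z); rewrite e eqxx.
have hI : Int x y t0 by rewrite /Int htP (nbr y).
have ht0X : t0 \in X (a0 :: b0 :: p') by apply: (X_mem ha0 ht0a).
have hXI := conn_Int hxy (X_gpath hp.1) hnb ht0X hI.
case: (Hg (xy := (x, y)) hxy) => /= _ _ [s [hs hH hab]].
case/X_memP: (hH _ (conj hp hXI)) => v [hv hsv].
case: (consec hv hsz) => p1 [p2 [w hcons]].
case: (eG_meet (edge _ _ _ _ hcons)) => t [htv htw].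
have hvsub : forall u, u \in Phi v -> Int x y u by move=> u hu; apply: hXI; apply: (X_mem hv hu).
case: (hab v hsv) => hsa hsb hLa hRb.
have hps : pos x y (Sn x y s) = s by apply: pos_Sn.
have hIt := hvsub _ htv.
have hSt : Sn x y (pos x y t) = t := Sn_pos (Int_Sq hIt).
have hpt := Int_pos hxy hIt.
case: (leqP (pos x y t) s) => hts.
  have H := conn_ivt hxy (@Phi_conn v) hvsub htv hsv.
  exists v, w, (g (x, y)).1.2, t, (Sn x y s); split => //.
  - by exists p1, p2.
  - by case: (inW hxy).
  - split => //.
    have -> : t = Sn x y (s - (s - pos x y t)) by rewrite subKn // hSt.
    apply: Lext_mem => //; last exact: leq_subr.
    apply: leq_trans hLa; apply: Lext_ge => //; first exact: leq_subr.
    move=> k hk; apply: H; rewrite hps; apply/andP; split; last exact: leq_subr.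
    move: hk hts; move: (pos x y t) => n; clear; lia.
have H := conn_ivt hxy (@Phi_conn v) hvsub hsv htv.
exists v, w, (g (x, y)).2, t, (Sn x y s); split => //.
- by exists p1, p2.
- by case: (inW hxy).
- split => //.
  have -> : t = Sn x y (s + (pos x y t - s)) by rewrite subnKC ?hSt // ltnW.
  apply: Rext_mem.
  apply: leq_trans hRb; apply: Rext_ge.
    move=> k hk; apply: H; rewrite hps; apply/andP; split; first exact: leq_addr.
    move: hk hts; move: (pos x y t) => n; clear; lia.
  have := (andP hpt).2; move: hts; move: (pos x y t) (mm x y) => n m; clear; lia.
Qed.

Lemma W_transversal : lp_transversal eG W.
Proof.
move=> p hp; apply/negPn/negP => hn.
have hnW : forall v, v \in p -> v \notin W.
  by move=> v hv; apply: contra hn => hvW; apply/hasP; exists v.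
case: (key_claim hp) => v [w [u [t [t' [[p1 [p2 hcons]] huW [htw htu] [htv' htu']]]]]].
have hup : u \notin p by apply/negP => hu; move: (hnW _ hu); rewrite huW.
have hneq : forall z, z \in p -> z != u.
  by move=> z hz; apply/negP => /eqP e; move: hup; rewrite -e hz.
have hv : v \in p by case: hcons => ->; rewrite mem_cat !inE eqxx ?orbT.
have hw : w \in p by case: hcons => ->; rewrite mem_cat !inE eqxx ?orbT.
have evu : eG v u := meet_eG (hneq _ hv) htv' htu'.
have ewu : eG w u := meet_eG (hneq _ hw) htw htu.
have hp1 := hp.1; have hp2 := hp.2.
case: hcons => e; rewrite e in hp1 hp2 hup.
  have hg : gpath eG (p1 ++ v :: u :: w :: p2).
    by apply: insert_gpath => //; rewrite eGsym.
  move: (hp2 _ hg); rewrite !size_cat /=; move: (size p1) (size p2) => n1 n2; clear; lia.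
have hg : gpath eG (p1 ++ w :: u :: v :: p2).
  by apply: insert_gpath => //; rewrite eGsym.
move: (hp2 _ hg); rewrite !size_cat /=; move: (size p1) (size p2) => n1 n2; clear; lia.
Qed.

End Subdiv.


Lemma lpt_le (V : finType) (eG : rel V) (S : {set V}) :
  lp_transversal eG S -> lpt eG <= #|S|.
Proof.
move=> hS; rewrite /lpt; case: (ex_minnP (lpt_ex eG)) => m _ hmin; apply: hmin.
by apply/existsP; exists S; rewrite eqxx /=; apply/asboolP.
Qed.

Lemma tw_ge1 (T : finType) (eH : rel T) x y : irreflexive eH -> eH x y -> 1 <= treewidth eH.
Proof.
move=> hirr hxy; rewrite /treewidth; case: (ex_minnP (has_tw_le_ex eH)) => k.
move=> /asboolP [I [t [B [[_ _ hedge _] hw]]]] _.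
case: (hedge x y hxy) => i /andP [hx hy].
have hne : x != y by apply/negP => /eqP e; move: hxy; rewrite e hirr.
have h2 : 2 <= #|B i|.
  have <- : #|[set x; y]| = 2 by rewrite cards2 hne.
  by apply: subset_leq_card; apply/subsetP => z; rewrite !inE => /orP [] /eqP ->.
have := leq_bigmax (F := fun i => #|B i|) i.
move: hw; rewrite /td_width; move: (\max_(i0 : I) #|B i0|) => n; move: (#|B i|) h2 => m.
clear; lia.
Qed.

Lemma card_D (T : finType) (eH : rel T) : irreflexive eH ->
  #|D eH| <= 2 * num_edges eH.
Proof.
move=> hirr.
pose E := [set A : {set T} | [exists x, exists y, eH x y && (A == [set x; y])]].
pose h := fun xy : T * T => ([set xy.1; xy.2], enum_rank xy.1 < enum_rank xy.2).
have inj : {in D eH &, injective h}.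
  move=> [x y] [x' y']; rewrite !inE /= => hxy hxy' [es eb].
  have hne : x != y by apply/negP => /eqP e; move: hxy; rewrite e hirr.
  have hne' : x' != y' by apply/negP => /eqP e; move: hxy'; rewrite e hirr.
  have hx' : x' \in [set x; y] by rewrite es !inE eqxx.
  have hy' : y' \in [set x; y] by rewrite es !inE eqxx orbT.
  move: hx' hy'; rewrite !inE => /orP [] /eqP ex /orP [] /eqP ey; subst x' y'.
  - by rewrite eqxx in hne'.
  - by [].
  - exfalso; have hr : enum_rank x != enum_rank y.
      by apply: contra hne => /eqP /enum_rank_inj ->.
    move: eb hr; rewrite -val_eqE /=.
    by case: (ltngtP (enum_rank x) (enum_rank y)) => // ->; rewrite eqxx.
  - by rewrite eqxx in hne'.
rewrite -(card_in_imset inj).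
apply: (@leq_trans #|setX E [set: bool]|).
  apply: subset_leq_card; apply/subsetP => _ /imsetP [[x y] hxy ->].
  rewrite in_setX in_setT andbT inE; apply/existsP; exists x; apply/existsP; exists y.
  by move: hxy; rewrite inE /= => ->; rewrite eqxx.
by rewrite cardsX cardsT card_bool mulnC.
Qed.

Lemma card_W (T V : finType) (eH : rel T) (g : T * T -> V * V * V * V) :
  #|W eH g| <= 4 * #|D eH|.
Proof.
have cU : forall (A B : {set V}), #|A :|: B| <= #|A| + #|B| := fun A B => (leq_card_setU A B).1.
rewrite /W.
set A1 := [set (g xy).1.1.1 | xy in D eH]; set A2 := [set (g xy).1.1.2 | xy in D eH].
set A3 := [set (g xy).1.2 | xy in D eH]; set A4 := [set (g xy).2 | xy in D eH].
have h1 : #|A1| <= #|D eH| by apply: leq_imset_card.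
have h2 : #|A2| <= #|D eH| by apply: leq_imset_card.
have h3 : #|A3| <= #|D eH| by apply: leq_imset_card.
have h4 : #|A4| <= #|D eH| by apply: leq_imset_card.
have := cU (A1 :|: A2 :|: A3) A4; have := cU (A1 :|: A2) A3; have := cU A1 A2.
move: h1 h2 h3 h4; move: #|A1| #|A2| #|A3| #|A4| #|D eH| #|A1 :|: A2| #|A1 :|: A2 :|: A3|
  #|A1 :|: A2 :|: A3 :|: A4| => n1 n2 n3 n4 n5 n6 n7 n8.
clear; lia.
Qed.

Unset Implicit Arguments.
Set Strict Implicit.

Theorem theorem4p2 (T : finType) (eH : rel T) (V : finType) (eG : rel V) :
  simple_graph eH -> connected_graph eH -> 2 <= #|T| ->
  simple_graph eG -> connected_graph eG -> H_graph eH eG ->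
  lpt eG <= 4 * (treewidth eH).+1 * num_edges eH.
Proof.
move=> [eHsym eHirr] hHc hT2 [eGsym eGirr] hGc.
move=> [U [eS [Phi [[f [P [finj HP Hdisj Hcov HeS]]] HPhi HG]]]].
case/card_gt1P: (hT2) => a0 [b0 [_ _ hab0]].
have Hdeg : forall x, exists y, eH x y.
  move=> x; have [x' hx'] : exists x', x' != x.
    by case: (eqVneq a0 x) => [e|h]; [exists b0; rewrite -e eq_sym | exists a0].
  case/connectP: (hHc x x') => [[|y p]] /=; first by move=> _ e; rewrite -e eqxx in hx'.
  by case/andP => hxy _ _; exists y.
have [y0 hxy0] := Hdeg a0.
have htw := tw_ge1 eHirr hxy0.
have hne : 0 < num_edges eH.
  rewrite /num_edges card_gt0; apply/set0Pn; exists [set a0; y0]; rewrite inE.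
  by apply/existsP; exists a0; apply/existsP; exists y0; rewrite hxy0 eqxx.
have hbound : 8 * num_edges eH <= 4 * (treewidth eH).+1 * num_edges eH.
  move: htw hne; move: (treewidth eH) (num_edges eH) => n1 n2; clear; nia.
apply: leq_trans hbound.
case: (leqP #|V| 1) => hV.
  apply: leq_trans (lpt_le (S := [set: V]) _) _.
    by move=> [|x p] [hp _] //; rewrite /= in_setT.
  rewrite cardsT; move: hV hne; move: #|V| (num_edges eH) => n1 n2; clear; lia.
case/card_gt1P: hV => a [b [_ _ hab]].
have HV2 : exists a b : V, a != b by exists a, b.
have hgood := @good_ex T U eH eS f P eHsym HP Hdisj HeS V eG Phi a HPhi HG eGsym eGirr hGc.
case: (choice (fun xy : T * T => hgood xy.1 xy.2)) => g Hg.
have hT := @W_transversal T U eH eS f P eHsym HP Hdisj HeS V eG Phi HPhi HG eGsym eGirr hGc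
  Hcov Hdeg HV2 g Hg.
apply: leq_trans (lpt_le hT) _.
have := card_W eH g; have := card_D eHirr.
move: #|W eH g| #|D eH| (num_edges eH) => n1 n2 n3; clear; lia.
Qed.
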